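(* Let $\mathcal{B}\models Th(\mathbb{N})$ be nonstandard, $\Delta\in B$ nonstandard, $P$ the $2^\Delta$-th prime of $\mathcal{B}$, and $S\subseteq B^3$ a set definable in $\mathcal{B}$ of pairwise disjoint triples $(p,q,r)$ of primes with $3p+5q=2r$ and $p,q,r>P$. Let $O=\{Q\in B: n\mid Q,\ 2^{n\Delta}\mid Q \text{ for all standard } 0<n\}$ and $A=\{Q+z\in B: Q\in O, z\in\mathbb{Z}\}$; for $y\in A$ let $O_y$ be the unique element of $O$ with $y-O_y\in\mathbb{Z}$. For $Q\in O$ let $\varepsilon(Q)$ be the $\mathbb{P}\times\mathbb{P}$-matrix with $\varepsilon(Q)_{pq}=Q/2^\Delta$ if $p,q\le P$; $Q/3$ if $p,q$ belong to the same triple of $S$ (allowing $p=q$); $Q$ if $p=q>P$ lies in no triple of $S$; $0$ otherwise. For $y\in A$ put $\varepsilon(y)=\varepsilon(O_y)+(y-O_y)I$, and define $e:B\times A\to B$ by $e(0,0)=1$, $e(0,z)=0$ for $z\ne0$, and $e(x,y)=\prod_{p\in\mathbb{P}}p^{(\varepsilon(y)v(x))_p}$ for $x\ne0$. Then for all $Q,R\in O$ and every $(p,q,r)\in S$, $$e(R\cdot 3p,Q+1)+e(R\cdot 5q,Q+1)=e(R\cdot 2r,Q+1).$$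
   Context: $\mathbb{P}$ is the set of primes of $\mathcal{B}$, $v(x)=(v_p(x))_{p\in\mathbb{P}}$ with $v_p(x)$ the exponent of $p$ in $x$ (computed in $\mathcal{B}$), $I$ the identity matrix; the matrix–vector product is computed in $\mathcal{B}$. *)

(* Defs.v *)
From Stdlib Require Import ClassicalEpsilon.
From mathcomp Require Import all_boot ssralg ssrint.
Set Implicit Arguments. Unset Strict Implicit. Unset Printing Implicit Defensive.

Inductive aterm : Type :=
| tvar  : nat -> aterm
| tzero : aterm
| tsucc : aterm -> aterm
| tadd  : aterm -> aterm -> aterm
| tmul  : aterm -> aterm -> aterm.

Inductive aform : Type :=
| feq  : aterm -> aterm -> aform
| fbot : aform
| fimp : aform -> aform -> aform
| fand : aform -> aform -> aform
| for_ : aform -> aform -> aform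
| fall : aform -> aform      (* de Bruijn: binds variable 0 *)
| fex  : aform -> aform.

Record arith_struct : Type := ArithStruct {
  car :> Type;
  s0 : car;
  sS : car -> car;
  sadd : car -> car -> car;
  smul : car -> car -> car }.

Definition scons (T : Type) (a : T) (f : nat -> T) : nat -> T :=
  fun i => match i with 0 => a | S k => f k end.

Fixpoint teval (M : arith_struct) (s : nat -> M) (t : aterm) : M :=
  match t with
  | tvar n => s n
  | tzero => s0 M
  | tsucc u => sS (teval s u)
  | tadd u v => sadd (teval s u) (teval s v)
  | tmul u v => smul (teval s u) (teval s v)
  end.

Fixpoint sat (M : arith_struct) (s : nat -> M) (f : aform) : Prop :=
  match f with
  | feq u v => teval s u = teval s v
  | fbot => False
  | fimp a b => sat s a -> sat s b
  | fand a b => sat s a /\ sat s b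
  | for_ a b => sat s a \/ sat s b
  | fall a => forall x : M, sat (scons x s) a
  | fex a => exists x : M, sat (scons x s) a
  end.

Definition Nstd : arith_struct := @ArithStruct nat 0 S addn muln.

(* B |= Th(N): every formula true in N under all assignments (i.e. whose
   universal closure is a true sentence) is true in B under all assignments. *)
Definition models_ThN (B : arith_struct) : Prop :=
  forall f : aform, (forall r : nat -> nat, sat (M:=Nstd) r f) ->
                   forall s : nat -> B, sat s f.

Definition num (B : arith_struct) (n : nat) : B := iter n (@sS B) (s0 B).
Definition standard (B : arith_struct) (x : B) : Prop := exists n, x = num B n.
Definition ltB (B : arith_struct) (x y : B) : Prop := exists k, y = sadd x (sS k).
Definition dvdB (B : arith_struct) (d x : B) : Prop := exists k, x = smul d k.
Definition primeB (B : arith_struct) (p : B) : Prop :=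
  ltB (num B 1) p /\ forall d k : B, p = smul d k -> d = num B 1 \/ d = p.

(* "Computed in B": the B-interpretation of an arithmetical relation R on
   assignments, i.e. B satisfies some formula that defines R in N.
   (Any two such formulas are equivalent in N, hence in B.) *)
Definition inB (B : arith_struct) (R : (nat -> nat) -> Prop) (s : nat -> B) : Prop :=
  exists f : aform, (forall r : nat -> nat, sat (M:=Nstd) r f <-> R r) /\ sat s f.

Definition pb (P : Prop) : bool :=
  if excluded_middle_informative P then true else false.

(* p is the k-th prime (k >= 1, the first prime being 2) *)
Definition is_kth_prime (k p : nat) : Prop :=
  prime p /\ count prime (iota 0 p) = k.-1.

(* P = the (2^Delta)-th prime; assignment (P, Delta) *)
Definition R_P (r : nat -> nat) : Prop := is_kth_prime (2 ^ r 1) (r 0).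

(* t = 2^(n*Delta); assignment (t, Delta) *)
Definition R_pow2 (n : nat) (r : nat -> nat) : Prop := r 0 = 2 ^ (n * r 1).

Section Meta.
Variable SN : nat -> nat -> nat -> Prop.
Variables (Delta P Q : nat).

Definition in_triple (p : nat) : Prop :=
  exists a b c, SN a b c /\ (p = a \/ p = b \/ p = c).
Definition same_triple (p q : nat) : Prop :=
  exists a b c, SN a b c /\ (p = a \/ p = b \/ p = c) /\ (q = a \/ q = b \/ q = c).

Definition epsN (p q : nat) : nat :=
  if (p <= P) && (q <= P) then Q %/ 2 ^ Delta
  else if pb (same_triple p q) then Q %/ 3
  else if (p == q) && (P < p) && ~~ pb (in_triple p) then Q
  else 0.

(* exponent of p in e(x, Q + z) : (eps(Q) v(x) + z v(x))_p, z = zp - zn *)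
Definition expoN (zp zn x p : nat) : nat :=
  (\sum_(q < x.+1 | prime q) epsN p q * logn q x) + zp * logn p x - zn * logn p x.

Definition eN_rel (zp zn x v : nat) : Prop :=
  if x == 0 then v = (if (Q == 0) && (zp == 0) && (zn == 0) then 1 else 0)
  else exists M : nat, (forall p, prime p -> M <= p -> expoN zp zn x p = 0) /\
         v = \prod_(p < M | prime p) p ^ expoN zp zn x p.
End Meta.

Definition int_pos (z : int) : nat := match z with Posz n => n | Negz _ => 0 end.
Definition int_neg (z : int) : nat := match z with Posz _ => 0 | Negz n => n.+1 end.

(* assignment layout for e: (v, x, Q, Delta, P, params of theta ...);
   theta defines S with assignment (p, q, r, params ...) *)
Definition R_e (theta : aform) (z : int) (r : nat -> nat) : Prop :=
  eN_rel (fun a b c => sat (M:=Nstd) (scons a (scons b (scons c (fun i => r (5 + i))))) theta)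
         (r 3) (r 4) (r 2) (int_pos z) (int_neg z) (r 1) (r 0).

Section InB.
Variables (B : arith_struct) (Delta : B).

Definition inO (Q : B) : Prop :=
  forall n : nat, 0 < n ->
    dvdB (num B n) Q /\
    exists t : B, inB (R_pow2 n) (scons t (scons Delta (fun _ => s0 B))) /\ dvdB t Q.

Definition plusZ (Q : B) (z : int) (y : B) : Prop :=
  match z with
  | Posz n => y = sadd Q (num B n)
  | Negz n => sadd y (num B n.+1) = Q
  end.

(* v = e(x, y), S defined by theta with parameters sigma *)
Definition eB (P : B) (theta : aform) (sigma : nat -> B) (x y v : B) : Prop :=
  exists (Q : B) (z : int), inO Q /\ plusZ Q z y /\
    inB (R_e theta z)
      (scons v (scons x (scons Q (scons Delta (scons P sigma))))).
End InB.

(* Main.v *)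
Require Import Defs.
From mathcomp Require Import all_boot ssralg ssrint zify.
From Stdlib Require Import FunctionalExtensionality Setoid ClassicalEpsilon PropExtensionality Classical.
Set Implicit Arguments. Unset Strict Implicit. Unset Printing Implicit Defensive.

Local Notation "# n" := (tvar n) (at level 0, n at level 0, format "# n").

Fixpoint tsub (sg : nat -> aterm) (t : aterm) : aterm :=
  match t with
  | tvar n => sg n
  | tzero => tzero
  | tsucc u => tsucc (tsub sg u)
  | tadd u v => tadd (tsub sg u) (tsub sg v)
  | tmul u v => tmul (tsub sg u) (tsub sg v)
  end.

Definition tlift (t : aterm) : aterm := tsub (fun n => tvar (S n)) t.

Definition upsub (sg : nat -> aterm) : nat -> aterm :=
  fun n => match n with 0 => tvar 0 | S k => tlift (sg k) end.

Fixpoint fsub (sg : nat -> aterm) (f : aform) : aform :=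
  match f with
  | feq u v => feq (tsub sg u) (tsub sg v)
  | fbot => fbot
  | fimp a b => fimp (fsub sg a) (fsub sg b)
  | fand a b => fand (fsub sg a) (fsub sg b)
  | for_ a b => for_ (fsub sg a) (fsub sg b)
  | fall a => fall (fsub (upsub sg) a)
  | fex a => fex (fsub (upsub sg) a)
  end.

Lemma teval_ext (M : arith_struct) (s s' : nat -> M) t :
  (forall n, s n = s' n) -> teval s t = teval s' t.
Proof. move=> h; elim: t => //= [u ->|u -> v ->|u -> v ->] //. Qed.

Lemma sat_ext (M : arith_struct) f : forall (s s' : nat -> M),
  (forall n, s n = s' n) -> (sat s f <-> sat s' f).
Proof.
elim: f => //=.
- move=> u v s s' h; by rewrite (teval_ext u h) (teval_ext v h).
- move=> a IHa b IHb s s' h; rewrite (IHa s s' h) (IHb s s' h); tauto.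
- move=> a IHa b IHb s s' h; rewrite (IHa s s' h) (IHb s s' h); tauto.
- move=> a IHa b IHb s s' h; rewrite (IHa s s' h) (IHb s s' h); tauto.
- move=> a IHa s s' h.
  have e : forall x, (sat (scons x s) a <-> sat (scons x s') a) by move=> x; apply IHa; case.
  by split=> H x; apply/e.
- move=> a IHa s s' h.
  have e : forall x, (sat (scons x s) a <-> sat (scons x s') a) by move=> x; apply IHa; case.
  by split=> -[x H]; exists x; apply/e.
Qed.

Lemma sat_ext1 (M : arith_struct) f (s s' : nat -> M) :
  (forall n, s n = s' n) -> sat s f -> sat s' f.
Proof. move=> h; exact: (proj1 (sat_ext _ h)). Qed.

Lemma teval_sub (M : arith_struct) (s : nat -> M) sg t :
  teval s (tsub sg t) = teval (fun n => teval s (sg n)) t.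
Proof. elim: t => //= [u ->|u -> v ->|u -> v ->] //. Qed.

Lemma teval_lift (M : arith_struct) (s : nat -> M) x t :
  teval (scons x s) (tlift t) = teval s t.
Proof. by rewrite /tlift teval_sub. Qed.

Lemma sat_sub (M : arith_struct) f : forall (s : nat -> M) sg,
  sat s (fsub sg f) <-> sat (fun n => teval s (sg n)) f.
Proof.
elim: f => //=.
- by move=> u v s sg; rewrite !teval_sub.
- move=> a IHa b IHb s sg; rewrite IHa IHb; tauto.
- move=> a IHa b IHb s sg; rewrite IHa IHb; tauto.
- move=> a IHa b IHb s sg; rewrite IHa IHb; tauto.
- move=> a IHa s sg; split=> H x.
  + have := H x; rewrite IHa; apply: sat_ext1; case=> //= n; by rewrite teval_lift.
  + rewrite IHa; have := H x; apply: sat_ext1; case=> //= n; by rewrite teval_lift.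
- move=> a IHa s sg; split=> -[x H]; exists x.
  + move: H; rewrite IHa; apply: sat_ext1; case=> //= n; by rewrite teval_lift.
  + rewrite IHa; move: H; apply: sat_ext1; case=> //= n; by rewrite teval_lift.
Qed.

Fixpoint ctx (ts : seq aterm) (off : nat) : nat -> aterm :=
  match ts with
  | [::] => fun n => tvar (Nat.add off n)
  | t :: ts' => fun n => match n with 0 => t | S k => ctx ts' off k end
  end.

Definition inst_def (ts : seq aterm) (off : nat) (f : aform) := fsub (ctx ts off) f.
Fact inst_key : unit. Proof. exact: tt. Qed.
Definition inst := locked_with inst_key inst_def.
Lemma instE : inst = inst_def. Proof. by rewrite /inst; case: inst_key. Qed.

Definition Spec (F : aform) (a : nat) (Rel : (nat -> nat) -> (nat -> nat) -> Prop) :=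
  forall (s g : nat -> nat), (forall n, s (Nat.add a n) = g n) ->
    (sat (M:=Nstd) s F <-> Rel s g).

Lemma ctx_tail (M : arith_struct) (s : nat -> M) ts off n :
  teval s (ctx ts off (Nat.add (size ts) n)) = teval s (tvar (Nat.add off n)).
Proof. by elim: ts. Qed.

Lemma inst_spec F a Rel (h : Spec F a Rel) (s g : nat -> nat) ts off :
  size ts = a -> (forall n, s (Nat.add off n) = g n) ->
  (sat (M:=Nstd) s (inst ts off F) <-> Rel (fun n => teval (M:=Nstd) s (ctx ts off n)) g).
Proof.
move=> hs hg; rewrite instE /inst_def (sat_sub (M:=Nstd)); apply: h => n.
by rewrite -hs (ctx_tail (M:=Nstd)) /= hg.
Qed.

Definition beta (c d i : nat) := c %% (1 + i.+1 * d).

Lemma coprime_beta (m i j : nat) : i < j -> j <= m ->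
  coprime (1 + i.+1 * m`!) (1 + j.+1 * m`!).
Proof.
move=> lij ljm.
set a := 1 + i.+1 * m`!; set b := 1 + j.+1 * m`!.
apply/negPn/negP => nc.
have g0 : 0 < gcdn a b by rewrite gcdn_gt0 /a addnC ltn_addl.
have g1 : 1 < gcdn a b by rewrite ltn_neqAle eq_sym nc g0.
set p := pdiv (gcdn a b).
have pp : prime p := pdiv_prime g1.
have pa : p %| a by apply: dvdn_trans (pdiv_dvd _) (dvdn_gcdl _ _).
have pb : p %| b by apply: dvdn_trans (pdiv_dvd _) (dvdn_gcdr _ _).
have hsub : p %| b - a := dvdn_sub pb pa.
have eba : b - a = (j - i) * m`!.
  by rewrite /a /b subnDl -mulnBl subSS.
move: hsub; rewrite eba Euclid_dvdM // => /orP [pji|pf].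
- have : p %| m`!.
    apply: dvdn_trans pji _; apply: dvdn_fact.
    rewrite subn_gt0 lij /=; apply: leq_trans (leq_subr _ _) ljm.
  move=> pf.
  have : p %| 1.
    by rewrite -(dvdn_addr 1 (dvdn_mull i.+1 pf)) addnC.
  by rewrite dvdn1 => /eqP p1; move: pp; rewrite p1.
- have : p %| 1.
    by rewrite -(dvdn_addr 1 (dvdn_mull i.+1 pf)) addnC.
  by rewrite dvdn1 => /eqP p1; move: pp; rewrite p1.
Qed.

Lemma beta_exists (n : nat) (g : nat -> nat) :
  exists c d, forall i, i <= n -> beta c d i = g i.
Proof.
set m := n + \sum_(i < n.+1) g i.
set d := m`!.
set mo := fun i => 1 + i.+1 * d.
have gmo : forall i, i <= n -> g i < mo i.
  move=> i lin; rewrite /mo add1n ltnS.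
  apply: leq_trans (leq_pmull d (ltn0Sn i)).
  apply: leq_trans (fact_geq _).
  apply: leq_trans (leq_addl n _).
  have lin' : i < n.+1 by [].
  have -> : g i = g (Ordinal lin') by [].
  by rewrite (bigD1 (Ordinal lin')) //= leq_addr.
have cop : forall i j, i < j -> j <= n -> coprime (mo i) (mo j).
  move=> i j lij ljn; apply: coprime_beta => //.
  by apply: leq_trans ljn (leq_addr _ _).
have cprod : forall k, k <= n -> coprime (\prod_(i < k) mo i) (mo k).
  move=> k lkn; elim: k lkn => [|k IH] lkn; first by rewrite big_ord0 coprime1n.
  rewrite big_ord_recr /= coprimeMl; apply/andP; split.
  -
    have : forall j, j < k.+1 -> coprime (\prod_(i < j) mo i) (mo k.+1).
      elim=> [|j IHj] lj; first by rewrite big_ord0 coprime1n.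
      rewrite big_ord_recr /= coprimeMl IHj ?(ltnW lj) //=.
      by apply: cop; [exact: ltnW | exact: lkn].
    by apply.
  - by apply: cop.
have main : forall k, k <= n.+1 -> exists c, forall i, i < k -> c %% mo i = g i.
  elim=> [|k IH] lk; first by exists 0.
  have [c hc] := IH (ltnW lk).
  exists (chinese (\prod_(i < k) mo i) (mo k) c (g k)) => i lik.
  have cp := cprod k lk.
  case: (ltngtP i k) => [lik'|gki|eik]; last first.
  - rewrite eik chinese_modr // modn_small //; exact: gmo.
  - by move: lik; rewrite ltnS leqNgt gki.
  - rewrite -(hc i lik').
    have dv : mo i %| \prod_(j < k) mo j.
      have -> : i = nat_of_ord (Ordinal lik') by [].
      by rewrite (bigD1 (Ordinal lik')) //= dvdn_mulr.
    by rewrite -(modn_dvdm _ dv) chinese_modl // modn_dvdm.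
have [c hc] := main n.+1 (leqnn _).
by exists c, d => i lin; apply: hc.
Qed.

Definition tnum n := iter n tsucc tzero.
Definition fnot a := fimp a fbot.

Ltac ispec S G := rewrite (inst_spec S (g:=G)) ;
  [ | reflexivity | let n := fresh "n" in intro n; simpl; (try reflexivity); (try (match goal with H : forall _ : nat, _ = ?g _ |- _ = ?g _ => exact: H end)) ].

Definition Fle := fex (feq #2 (tadd #1 #0)).
Lemma Fle_spec : Spec Fle 2 (fun s g => s 0 <= s 1).
Proof.
move=> s g hg /=; split=> [[k ->]|h]; first by rewrite leq_addr.
by exists (s 1 - s 0); rewrite subnKC.
Qed.

Definition Flt := fex (feq #2 (tadd #1 (tsucc #0))).
Lemma Flt_spec : Spec Flt 2 (fun s g => s 0 < s 1).
Proof.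
move=> s g hg /=; split=> [[k ->]|h]; first by rewrite addnS ltnS leq_addr.
by exists (s 1 - (s 0).+1); rewrite addnS -addSn subnKC.
Qed.

Definition Fprime := fand (fex (feq #1 (tadd (tnum 1) (tsucc #0))))
  (fall (fall (fimp (feq #2 (tmul #1 #0)) (for_ (feq #1 (tnum 1)) (feq #1 #2))))).
Lemma Fprime_spec : Spec Fprime 1 (fun s g => prime (s 0)).
Proof.
move=> s g hg /=; split.
- move=> [[k hk] H]; apply/primeP; split; first by rewrite hk.
  move=> d /dvdnP [k' hk'].
  have := H d k'; rewrite [d * k']mulnC -hk' => /(_ erefl) [->|->]; by rewrite eqxx ?orbT.
- move/primeP=> [h1 h2]; split.
  + by exists (s 0 - 2); rewrite add1n -addn2 subnK.
  + move=> d k hdk; have : d %| s 0 by rewrite hdk dvdn_mulr.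
    by move/h2=> /orP [/eqP ->|/eqP ->]; [left|right].
Qed.

Definition Fmod := for_ (fand (feq #2 tzero) (feq #0 #1))
  (fex (fand (feq #2 (tadd (tmul #0 #3) #1)) (fex (feq #4 (tadd #2 (tsucc #0)))))).
Lemma Fmod_spec : Spec Fmod 3 (fun s g => s 0 = s 1 %% s 2).
Proof.
move=> s g hg /=; split.
- move=> [[-> ->]|[q [-> [k hk]]]]; first by rewrite modn0.
  rewrite modnMDl modn_small // hk addnS ltnS leq_addr //.
- move=> ->; case: (posnP (s 2)) => [->|p2]; first by left; rewrite modn0.
  right; exists (s 1 %/ s 2); split; first exact: divn_eq.
  exists (s 2 - (s 1 %% s 2).+1); rewrite addnS -addSn subnKC //; exact: ltn_pmod.
Qed.

Definition Fdiv := for_ (fand (feq #2 tzero) (feq #0 tzero))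
  (fex (fand (feq #2 (tadd (tmul #1 #3) #0)) (fex (feq #4 (tadd #1 (tsucc #0)))))).
Lemma Fdiv_spec : Spec Fdiv 3 (fun s g => s 0 = s 1 %/ s 2).
Proof.
move=> s g hg /=; split.
- move=> [[-> ->]|[r [-> [k hk]]]]; first by rewrite divn0.
  have p2 : 0 < s 2 by rewrite hk addnS.
  rewrite divnMDl // divn_small ?addn0 // hk addnS ltnS leq_addr //.
- move=> ->; case: (posnP (s 2)) => [->|p2]; first by left; rewrite divn0.
  right; exists (s 1 %% s 2); split; first exact: divn_eq.
  exists (s 2 - (s 1 %% s 2).+1); rewrite addnS -addSn subnKC //; exact: ltn_pmod.
Qed.

Definition Fdvd := fex (feq #2 (tmul #1 #0)).
Lemma Fdvd_spec : Spec Fdvd 2 (fun s g => s 0 %| s 1).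
Proof.
move=> s g hg /=; split=> [[k ->]|/dvdnP [k ->]]; first by rewrite dvdn_mulr.
by exists k; rewrite mulnC.
Qed.

Definition Fbeta := inst [:: #0; #1; tsucc (tmul (tsucc #3) #2)] 4 Fmod.
Lemma Fbeta_spec : Spec Fbeta 4 (fun s g => s 0 = beta (s 1) (s 2) (s 3)).
Proof.
move=> s g hg; rewrite /Fbeta; ispec Fmod_spec g.
by rewrite /beta /= add1n.
Qed.

Fixpoint iterN (f : nat -> nat -> nat) (a n : nat) : nat :=
  match n with 0 => a | S k => f k (iterN f a k) end.

Definition Fiter (Fs : aform) :=
  fex (fex (fand (inst [:: #3; #1; #0; tzero] 7 Fbeta)
   (fand (inst [:: #2; #1; #0; #4] 7 Fbeta)
    (fall (fimp (inst [:: #0; #5] 8 Flt)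
      (fex (fex (fand (inst [:: #1; #4; #3; #2] 10 Fbeta)
        (fand (inst [:: #0; #4; #3; tsucc #2] 10 Fbeta)
              (inst [:: #0; #2; #1; #8; #9] 10 Fs)))))))))).

Lemma Fiter_spec Fs f :
  Spec Fs 5 (fun s g => s 0 = f (s 3) (s 4) g (s 1) (s 2)) ->
  Spec (Fiter Fs) 5 (fun s g => s 0 = iterN (f (s 3) (s 4) g) (s 1) (s 2)).
Proof.
move=> hs s g hg /=; split.
- move=> [c [d [hA [hB hC]]]].
  move: hA hB; ispec Fbeta_spec g; ispec Fbeta_spec g; move=> /= hA hB.
  suff H : forall i, i <= s 2 -> beta c d i = iterN (f (s 3) (s 4) g) (s 1) i.
    by rewrite hB H.
  elim=> [|i IH] li; first by rewrite -hA.
  have := hC i; ispec Flt_spec g => /= /(_ li) [w [u]].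
  ispec Fbeta_spec g; ispec Fbeta_spec g; ispec hs g => /= -[hu [hw hf]].
  by rewrite -hw hf hu IH // ltnW.
- move=> hres.
  have [c [d hcd]] := beta_exists (s 2) (iterN (f (s 3) (s 4) g) (s 1)).
  exists c, d; ispec Fbeta_spec g; ispec Fbeta_spec g => /=.
  split; first by rewrite hcd.
  split; first by rewrite hcd.
  move=> i; ispec Flt_spec g => /= li.
  exists (beta c d i), (beta c d i.+1).
  ispec Fbeta_spec g; ispec Fbeta_spec g; ispec hs g => /=.
  split=> //; split=> //.
  by rewrite !hcd // ltnW.
Qed.


Lemma iterN_sum (T : nat -> nat) n : iterN (fun i u => u + T i) 0 n = \sum_(i < n) T i.
Proof. elim: n => [|n IH] /=; first by rewrite big_ord0. by rewrite big_ord_recr /= IH. Qed.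

Lemma iterN_prod (T : nat -> nat) n : iterN (fun i u => u * T i) 1 n = \prod_(i < n) T i.
Proof. elim: n => [|n IH] /=; first by rewrite big_ord0. by rewrite big_ord_recr /= IH. Qed.

Definition Fpowstep := feq #0 (tmul #2 #3).
Lemma Fpowstep_spec : Spec Fpowstep 5 (fun s g => s 0 = (fun e1 e2 (g : nat -> nat) (i u : nat) => u * e1) (s 3) (s 4) g (s 1) (s 2)).
Proof. by move=> s g hg. Qed.

Definition Fpow := inst [:: #0; tnum 1; #2; #1; tzero] 3 (Fiter Fpowstep).
Lemma Fpow_spec : Spec Fpow 3 (fun s g => s 0 = s 1 ^ s 2).
Proof.
move=> s g hg; rewrite /Fpow; ispec (Fiter_spec Fpowstep_spec) g => /=.
rewrite (_ : iterN _ _ _ = s 1 ^ s 2) //.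
elim: (s 2) => //= n ->; by rewrite expnS mulnC.
Qed.

Definition Flogn :=
  for_ (fand (inst [:: #1] 3 Fprime) (fand (fnot (feq #2 tzero))
    (fex (fex (fand (inst [:: #1; #3; #2] 5 Fpow) (fand (inst [:: #0; #3; tsucc #2] 5 Fpow)
      (fand (inst [:: #1; #4] 5 Fdvd) (fnot (inst [:: #0; #4] 5 Fdvd)))))))))
  (fand (for_ (fnot (inst [:: #1] 3 Fprime)) (feq #2 tzero)) (feq #0 tzero)).

Lemma Flogn_spec : Spec Flogn 3 (fun s g => s 0 = logn (s 1) (s 2)).
Proof.
move=> s g hg /=; ispec Fprime_spec g => /=.
case pp: (prime (s 1)); last first.
  have -> : logn (s 1) (s 2) = 0 by rewrite lognE pp.
  split.
  - by move=> [[]|[]].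
  - by move=> ->; right; split=> //; left.
case: (posnP (s 2)) => [x0|xp].
  rewrite x0 logn0; split.
  - by move=> [[_ [H]]|[]].
  - by move=> ->; right; split=> //; right.
split.
- case=> [[_ [_ [w2 [w1 H]]]]|[[F|x0] _]]; last by rewrite x0 in xp.
  2: by case: F.
  move: H; ispec Fpow_spec g; ispec Fpow_spec g; ispec Fdvd_spec g; ispec Fdvd_spec g => /=.
  move=> [-> [-> [h1 h2]]].
  move: h1 h2; rewrite !pfactor_dvdn // => h1 /negP; rewrite -ltnNge ltnS => h2.
  by apply/eqP; rewrite eqn_leq h1 h2.
- move=> h0; left; split=> //; split; first by move=> h; rewrite h in xp.
  exists (s 1 ^ logn (s 1) (s 2)), (s 1 ^ (logn (s 1) (s 2)).+1).
  ispec Fpow_spec g; ispec Fpow_spec g; ispec Fdvd_spec g; ispec Fdvd_spec g => /=.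
  rewrite h0; split=> //; split=> //; rewrite !pfactor_dvdn //; split=> //.
  by rewrite ltnn.
Qed.


Section Th.
Variable theta : aform.

Definition SNg (g : nat -> nat) (a b c : nat) : Prop :=
  sat (M:=Nstd) (scons a (scons b (scons c (fun i => g (Nat.add 4 i))))) theta.

Definition Fth := inst [:: #0; #1; #2] 7 theta.
Lemma Fth_spec : Spec Fth 3 (fun s g => SNg g (s 0) (s 1) (s 2)).
Proof.
move=> s g hg; rewrite /Fth instE /inst_def (sat_sub (M:=Nstd)) /SNg.
apply: sat_ext => -[|[|[|n]]] //=; exact: (hg (Nat.add 4 n)).
Qed.

Definition or3 (t : aterm) := for_ (feq t #2) (for_ (feq t #1) (feq t #0)).

Definition Fst := fex (fex (fex (fand (inst [:: #2; #1; #0] 5 Fth) (fand (or3 #3) (or3 #4))))).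
Lemma Fst_spec : Spec Fst 2 (fun s g => same_triple (SNg g) (s 0) (s 1)).
Proof.
move=> s g hg /=; split.
- move=> [a [b [c]]]; ispec Fth_spec g => /= -[h [h1 h2]].
  by exists a, b, c.
- move=> [a [b [c [h [h1 h2]]]]]; exists a, b, c; ispec Fth_spec g => /=.
  by [].
Qed.

Definition Fin := fex (fex (fex (fand (inst [:: #2; #1; #0] 4 Fth) (or3 #3)))).
Lemma Fin_spec : Spec Fin 1 (fun s g => in_triple (SNg g) (s 0)).
Proof.
move=> s g hg /=; split.
- move=> [a [b [c]]]; ispec Fth_spec g => /= -[h h1].
  by exists a, b, c.
- move=> [a [b [c [h h1]]]]; exists a, b, c; ispec Fth_spec g => /=.
  by [].
Qed.

Definition FA := fand (inst [:: #1; #6] 3 Fle) (inst [:: #2; #6] 3 Fle).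
Definition FST := inst [:: #1; #2] 3 Fst.
Definition FC := fand (feq #1 #2) (fand (inst [:: #6; #1] 3 Flt) (fnot (inst [:: #1] 3 Fin))).
Definition FW1 := fex (fand (inst [:: #0; tnum 2; #6] 4 Fpow) (inst [:: #1; #5; #0] 4 Fdiv)).
Definition FW3 := inst [:: #0; #4; tnum 3] 3 Fdiv.

Definition Feps :=
  for_ (fand FA FW1)
  (for_ (fand (fnot FA) (fand FST FW3))
  (for_ (fand (fnot FA) (fand (fnot FST) (fand FC (feq #0 #4))))
        (fand (fnot FA) (fand (fnot FST) (fand (fnot FC) (feq #0 tzero)))))).

Lemma Feps_spec : Spec Feps 3 (fun s g => s 0 = epsN (SNg g) (g 2) (g 3) (g 1) (s 1) (s 2)).
Proof.
move=> s g hg.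
have e4 : s 4 = g 1 := hg 1.
have e5 : s 5 = g 2 := hg 2.
have e6 : s 6 = g 3 := hg 3.
have hA : sat (M:=Nstd) s FA <-> (s 1 <= g 3 /\ s 2 <= g 3).
  by rewrite /FA /=; ispec Fle_spec g; ispec Fle_spec g => /=; rewrite e6.
have hST : sat (M:=Nstd) s FST <-> same_triple (SNg g) (s 1) (s 2).
  by rewrite /FST; ispec Fst_spec g.
have hC : sat (M:=Nstd) s FC <-> (s 1 = s 2 /\ g 3 < s 1 /\ ~ in_triple (SNg g) (s 1)).
  by rewrite /FC /=; ispec Flt_spec g; ispec Fin_spec g => /=; rewrite e6.
have hW1 : sat (M:=Nstd) s FW1 <-> s 0 = g 1 %/ 2 ^ g 2.
  rewrite /FW1 /=; split.
  - move=> [t]; ispec Fpow_spec g; ispec Fdiv_spec g => /= -[-> ->].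
    by rewrite e4 e5.
  - move=> h; exists (2 ^ g 2); ispec Fpow_spec g; ispec Fdiv_spec g => /=.
    by rewrite e4 e5.
have hW3 : sat (M:=Nstd) s FW3 <-> s 0 = g 1 %/ 3.
  by rewrite /FW3; ispec Fdiv_spec g => /=; rewrite e4.
rewrite /Feps /fnot; cbn [sat teval]; rewrite hA hST hC hW1 hW3 e4 /epsN /pb.
case: (boolP ((s 1 <= g 3) && (s 2 <= g 3))) => [/andP [h1 h2]|nA].
  have : (s 1 <= g 3 /\ s 2 <= g 3) by [].
  tauto.
have nA' : ~ (s 1 <= g 3 /\ s 2 <= g 3) by move=> [h1 h2]; move: nA; rewrite h1 h2.
rewrite ?(negbTE nA) /=.
case: excluded_middle_informative => hst; first tauto.
case: excluded_middle_informative => hit /=.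
- have nC : ~ (s 1 = s 2 /\ g 3 < s 1 /\ ~ in_triple (SNg g) (s 1)) by tauto.
  rewrite andbF; tauto.
- rewrite andbT.
  case: (boolP ((s 1 == s 2) && (g 3 < s 1))) => [/andP [/eqP h1 h2]|nc].
    have : (s 1 = s 2 /\ g 3 < s 1 /\ ~ in_triple (SNg g) (s 1)) by [].
    tauto.
  have nC : ~ (s 1 = s 2 /\ g 3 < s 1 /\ ~ in_triple (SNg g) (s 1)).
    by move=> [h1 [h2 _]]; move: nc; rewrite h1 eqxx -h1 h2.
  tauto.
Qed.


Definition termN (g : nat -> nat) (p i : nat) :=
  if prime i then epsN (SNg g) (g 2) (g 3) (g 1) p i * logn i (g 0) else 0.

Definition Fterm :=
  for_ (fand (inst [:: #1] 3 Fprime) (fex (fex (fand (inst [:: #1; #4; #3] 5 Feps)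
          (fand (inst [:: #0; #3; #5] 5 Flogn) (feq #2 (tmul #1 #0)))))))
       (fand (fnot (inst [:: #1] 3 Fprime)) (feq #0 tzero)).
Lemma Fterm_spec : Spec Fterm 3 (fun s g => s 0 = termN g (s 2) (s 1)).
Proof.
move=> s g hg; rewrite /Fterm /fnot; cbn [sat teval]; ispec Fprime_spec g.
have e3 : s 3 = g 0 := hg 0.
rewrite /termN /=; case: (prime (s 1)); split.
- case=> [[_ [l [e]]]|[F _]]; last by case: (F isT).
  ispec (Feps_spec) g; ispec Flogn_spec g => /= -[-> [-> ->]].
  by rewrite e3.
- move=> h0; left; split=> //.
  exists (epsN (SNg g) (g 2) (g 3) (g 1) (s 2) (s 1)), (logn (s 1) (g 0)).
  by ispec (Feps_spec) g; ispec Flogn_spec g => /=; rewrite e3.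
- by move=> [[]|[_ ->]].
- by move=> ->; right.
Qed.

Definition Fsumstep := fex (fand (inst [:: #0; #2; #4] 6 Fterm) (feq #1 (tadd #3 #0))).
Lemma Fsumstep_spec : Spec Fsumstep 5
  (fun s g => s 0 = (fun e1 e2 (g : nat -> nat) i u => u + termN g e1 i) (s 3) (s 4) g (s 1) (s 2)).
Proof.
move=> s g hg; rewrite /Fsumstep; cbn [sat teval]; split.
- by move=> [t]; ispec Fterm_spec g => /= -[-> ->].
- move=> h0; exists (termN g (s 3) (s 1)); by ispec Fterm_spec g => /=; rewrite h0.
Qed.

Definition Fsum := inst [:: #0; tzero; tsucc #2; #1; tzero] 2 (Fiter Fsumstep).
Lemma Fsum_spec : Spec Fsum 2 (fun s g =>
  s 0 = \sum_(q < (g 0).+1 | prime q) epsN (SNg g) (g 2) (g 3) (g 1) (s 1) q * logn q (g 0)).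
Proof.
move=> s g hg; have e2 : s 2 = g 0 := hg 0.
rewrite /Fsum; ispec (Fiter_spec Fsumstep_spec) g; cbv beta.
rewrite iterN_sum /= e2 /termN.
by rewrite -big_mkcond.
Qed.

Definition Fexpo := fex (fex (fand (inst [:: #1; #3] 4 Fsum)
   (fand (inst [:: #0; #3; #4] 4 Flogn) (feq #2 (tadd #1 #0))))).
Lemma Fexpo_spec : Spec Fexpo 2 (fun s g =>
  s 0 = expoN (SNg g) (g 2) (g 3) (g 1) 1 0 (g 0) (s 1)).
Proof.
move=> s g hg; have e2 : s 2 = g 0 := hg 0.
rewrite /Fexpo /expoN; cbn [sat teval]; rewrite mul1n mul0n subn0; split.
- by move=> [S [L]]; ispec Fsum_spec g; ispec Flogn_spec g => /= -[-> [-> ->]]; rewrite e2.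
- move=> h0; eexists; eexists; ispec Fsum_spec g; ispec Flogn_spec g => /=.
  split; first reflexivity. split; first reflexivity. by rewrite h0 e2.
Qed.

Definition Fprodterm :=
  for_ (fand (inst [:: #1] 2 Fprime) (fex (fand (inst [:: #0; #2] 3 Fexpo) (inst [:: #1; #2; #0] 3 Fpow))))
       (fand (fnot (inst [:: #1] 2 Fprime)) (feq #0 (tnum 1))).
Definition pterm (g : nat -> nat) (i : nat) :=
  if prime i then i ^ expoN (SNg g) (g 2) (g 3) (g 1) 1 0 (g 0) i else 1.
Lemma Fprodterm_spec : Spec Fprodterm 2 (fun s g => s 0 = pterm g (s 1)).
Proof.
move=> s g hg; rewrite /Fprodterm /fnot; cbn [sat teval]; ispec Fprime_spec g.
rewrite /pterm /=; case: (prime (s 1)); split.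
- case=> [[_ [e]]|[F _]]; last by case: (F isT).
  by ispec Fexpo_spec g; ispec Fpow_spec g => /= -[-> ->].
- move=> h0; left; split=> //; eexists.
  by ispec Fexpo_spec g; ispec Fpow_spec g => /=; split; [reflexivity|].
- by move=> [[]|[_ ->]].
- by move=> ->; right.
Qed.

Definition Fprodstep := fex (fand (inst [:: #0; #2] 6 Fprodterm) (feq #1 (tmul #3 #0))).
Lemma Fprodstep_spec : Spec Fprodstep 5
  (fun s g => s 0 = (fun e1 e2 (g : nat -> nat) i u => u * pterm g i) (s 3) (s 4) g (s 1) (s 2)).
Proof.
move=> s g hg; rewrite /Fprodstep; cbn [sat teval]; split.
- by move=> [t]; ispec Fprodterm_spec g => /= -[-> ->].
- move=> h0; exists (pterm g (s 1)); by ispec Fprodterm_spec g => /=; rewrite h0.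
Qed.

Definition Fprod := inst [:: #0; tnum 1; #1; tzero; tzero] 2 (Fiter Fprodstep).
Lemma Fprod_spec : Spec Fprod 2 (fun s g =>
  s 0 = \prod_(p < s 1 | prime p) p ^ expoN (SNg g) (g 2) (g 3) (g 1) 1 0 (g 0) p).
Proof.
move=> s g hg; rewrite /Fprod; ispec (Fiter_spec Fprodstep_spec) g; cbv beta.
rewrite iterN_prod /= /pterm.
by rewrite -big_mkcond.
Qed.

Definition Fe :=
  for_ (fand (feq #1 tzero) (feq #0 tzero))
   (fand (fnot (feq #1 tzero)) (fex (fand
      (fall (fimp (inst [:: #0] 3 Fprime) (fimp (inst [:: #1; #0] 3 Fle) (inst [:: tzero; #0] 3 Fexpo))))
      (inst [:: #1; #0] 2 Fprod)))).
Lemma Fe_spec : Spec Fe 1 (fun s g =>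
  eN_rel (SNg g) (g 2) (g 3) (g 1) 1 0 (g 0) (s 0)).
Proof.
move=> s g hg; have e1 : s 1 = g 0 := hg 0.
rewrite /Fe /fnot /eN_rel; cbn [sat teval]; rewrite e1 andbF /=.
case: eqP => [x0|nx0]; split.
- by case=> [[_ ->]|[F _]] //; case: (F x0).
- by move=> ->; left.
- case=> [[h _]|[_ [M [HM Hp]]]]; first by case: nx0.
  exists M; split.
  + move=> p pp lMp; have := HM p; ispec Fprime_spec g; ispec Fle_spec g; ispec Fexpo_spec g => /=.
    by move=> /(_ pp lMp) <-.
  + by move: Hp; ispec Fprod_spec g => /=.
- move=> [M [HM Hp]]; right; split=> //; exists M; split.
  + move=> p; ispec Fprime_spec g; ispec Fle_spec g; ispec Fexpo_spec g => /= pp lMp.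
    by rewrite HM.
  + by ispec Fprod_spec g => /=.
Qed.

End Th.

Lemma logn_big (i x : nat) : 0 < x -> x < i -> logn i x = 0.
Proof.
move=> x0 xi; rewrite lognE; case: (prime i) => //=; rewrite x0 /=.
case hd: (i %| x) => //; have := dvdn_leq x0 hd; by rewrite leqNgt xi.
Qed.

Lemma sum_ext (F : nat -> nat) n m : n <= m -> (forall i, n <= i -> i < m -> F i = 0) ->
  \sum_(i < m) F i = \sum_(i < n) F i.
Proof.
elim: m => [|m IH] lnm H; first by move: lnm; rewrite leqn0 => /eqP ->.
case: (ltngtP n m.+1) lnm => // [lt|->] _ //.
rewrite big_ord_recr /= IH //; last by move=> i h1 h2; apply: H => //; apply: ltnW.
by rewrite H // addn0.
Qed.

Lemma prod_ext (F : nat -> nat) n m : n <= m -> (forall i, n <= i -> i < m -> F i = 1) ->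
  \prod_(i < m) F i = \prod_(i < n) F i.
Proof.
elim: m => [|m IH] lnm H; first by move: lnm; rewrite leqn0 => /eqP ->.
case: (ltngtP n m.+1) lnm => // [lt|->] _ //.
rewrite big_ord_recr /= IH //; last by move=> i h1 h2; apply: H => //; apply: ltnW.
by rewrite H // muln1.
Qed.

Lemma prod_logn (x M : nat) : 0 < x -> x < M ->
  \prod_(p < M | prime p) p ^ logn p x = x.
Proof.
move=> x0 xM.
have E : \prod_(i < x.+1) i ^ logn i x = x.
  have := partnT x0; rewrite /partn big_mkord => H.
  by rewrite -[RHS]H; apply: eq_bigl => i.
transitivity (\prod_(i < M) i ^ logn i x).
  rewrite [RHS](bigID (fun i : 'I_M => prime i)) /= [X in _ = _ * X]big1 ?muln1 //.
  by move=> i pi; rewrite lognE (negbTE pi).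
rewrite (@prod_ext (fun i => i ^ logn i x) x.+1 M) //.
by move=> i h1 h2; rewrite logn_big.
Qed.

Section Core.
Variable SN : nat -> nat -> nat -> Prop.
Variables (Delta P Q : nat).
Hypothesis hSN : forall a b c, SN a b c ->
  [/\ prime a, prime b, prime c & [/\ P < a, P < b & P < c]].
Hypothesis hdisj : forall a b c a' b' c', SN a b c -> SN a' b' c' ->
  (a = a' /\ b = b' /\ c = c') \/
  (forall u, (u = a \/ u = b \/ u = c) -> ~ (u = a' \/ u = b' \/ u = c')).
Hypothesis hP5 : 5 <= P.

Local Notation eps := (epsN SN Delta P Q).

Lemma triple_gtP s : in_triple SN s -> P < s.
Proof.
rewrite /in_triple => -[a [b [c [h hs]]]]; have [h1 h2 h3 [ha hb hc]] := hSN h.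
by case: hs => [->|[->|->]].
Qed.

Lemma eps_small k s : k <= P -> eps s k = if s <= P then Q %/ 2 ^ Delta else 0.
Proof.
move=> kP; rewrite /epsN kP andbT; case: (leqP s P) => // Ps.
rewrite /pb; destruct (excluded_middle_informative _) as [hst|nst] => /=.
  move: hst => [x1 [x2 [x3 [h [_ hk]]]]].
  have : P < k by apply: triple_gtP; exists x1, x2, x3.
  by rewrite ltnNge kP.
case: eqP => [ek|] //=; by move: Ps; rewrite ek ltnNge kP.
Qed.

Variables (p q r : nat).
Hypothesis hpqr : SN p q r.
Definition mem3 s := s = p \/ s = q \/ s = r.

Lemma st_iff s t : mem3 t -> (same_triple SN s t <-> mem3 s).
Proof.
move=> mt; split.
- move=> [a [b [c [h [hs ht]]]]].
  case: (hdisj hpqr h) => [[ea [eb ec]]|dj]; first by rewrite /mem3 ea eb ec.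
  by case: (dj t mt ht).
- by move=> ms; exists p, q, r.
Qed.

Lemma eps_big s t : mem3 t -> eps s t = if pb (mem3 s) then Q %/ 3 else 0.
Proof.
move=> mt.
have Pt : P < t by apply: triple_gtP; exists p, q, r.
rewrite /epsN (leqNgt t P) Pt andbF.
rewrite (propositional_extensionality _ _ (st_iff s mt)).
rewrite /pb; destruct (excluded_middle_informative _) as [hm|nm] => //=.
case: eqP => //= est; case: nm; by rewrite est.
Qed.

Lemma eps_eq s : [/\ eps s 3 + eps s p = eps s 5 + eps s q &
                    eps s 5 + eps s q = eps s 2 + eps s r].
Proof.
have l3 : 3 <= P by apply: leq_trans hP5.
have l2 : 2 <= P by apply: leq_trans hP5.
rewrite (eps_small (k:=3)) // (eps_small (k:=5)) // (eps_small (k:=2)) //.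
rewrite (eps_big s (t:=p)) ?(eps_big s (t:=q)) ?(eps_big s (t:=r)) //; rewrite /mem3; tauto.
Qed.


Definition A' N x s := \sum_(i < N | prime i) eps s i * logn i x.

Lemma A_ext x s N : 0 < x -> x < N ->
  \sum_(q < x.+1 | prime q) eps s q * logn q x = A' N x s.
Proof.
move=> x0 xN; rewrite /A' big_mkcond [RHS]big_mkcond.
rewrite (@sum_ext (fun i => if prime i then eps s i * logn i x else 0) x.+1 N) //.
by move=> i h1 h2; case: (prime i) => //; rewrite logn_big // muln0.
Qed.

Lemma A_mul N x y s : 0 < x -> 0 < y -> A' N (x * y) s = A' N x s + A' N y s.
Proof.
move=> x0 y0; rewrite /A' -big_split; apply: eq_bigr => i pi.
by rewrite lognM // mulnDr.
Qed.

Lemma A_prime N t s : prime t -> t < N -> A' N t s = eps s t.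
Proof.
move=> pt tN; rewrite /A' (bigD1 (Ordinal tN)) //= logn_prime // eqxx muln1.
rewrite big1 ?addn0 // => i /andP [pi ne]; rewrite logn_prime //.
by move: ne; rewrite -val_eqE /= => /negbTE ->; rewrite muln0.
Qed.

Lemma bound n : exists B, forall s t, t < n -> same_triple SN s t -> s < B.
Proof.
elim: n => [|n [B hB]]; first by exists 0.
case: (classic (in_triple SN n)) => [[a [b [c [h hn]]]]|nin].
- exists (maxn B (a + b + c).+1) => s t; rewrite ltnS leq_eqVlt => /orP [/eqP ->|ltn].
  + move=> [a' [b' [c' [h' [hs hn']]]]].
    case: (hdisj h h') => [[ea [eb ec]]|dj]; last by case: (dj n hn hn').
    rewrite leq_max; apply/orP; right; move: hs; rewrite -ea -eb -ec.
    case=> [->|[->|->]]; lia.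
  + move=> st; rewrite leq_max; apply/orP; left; exact: hB st.
- exists B => s t; rewrite ltnS leq_eqVlt => /orP [/eqP ->|ltn].
  + move=> [a' [b' [c' [h' [hs hn']]]]]; case: nin; by exists a', b', c'.
  + exact: hB.
Qed.

Hypothesis h3 : 3 * p + 5 * q = 2 * r.

Lemma core_main R : exists a b c,
  [/\ eN_rel SN Delta P Q 1 0 (R * (3 * p)) a, eN_rel SN Delta P Q 1 0 (R * (5 * q)) b,
      eN_rel SN Delta P Q 1 0 (R * (2 * r)) c & a + b = c].
Proof.
have [pp pq pr [Pp Pq Pr]] := hSN hpqr.
case: (posnP R) => [->|R0].
  by exists 0, 0, 0; rewrite /eN_rel !mul0n /= andbF.
set x1 := R * (3 * p); set x2 := R * (5 * q); set x3 := R * (2 * r).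
have x10 : 0 < x1 by rewrite /x1 !muln_gt0 R0 /= prime_gt0.
have x20 : 0 < x2 by rewrite /x2 !muln_gt0 R0 /= prime_gt0.
have x30 : 0 < x3 by rewrite /x3 !muln_gt0 R0 /= prime_gt0.
set X := x1 + x2 + x3.
have [Bd hB] := bound X.+1.
set M := (P + Bd + X).+1.
have PM : P < M by rewrite ltnS -addnA leq_addr.
have XM : X < M by rewrite ltnS leq_addl.
have BM : Bd < M by rewrite ltnS (addnC P) -addnA leq_addr.
set G := fun x => \prod_(i < M | prime i) i ^ A' M x i.
have key : forall x, 0 < x -> x <= X -> eN_rel SN Delta P Q 1 0 x (G x * x).
  move=> x x0 xX; have xM : x < M by apply: leq_ltn_trans xX XM.
  rewrite /eN_rel; case: eqP => [e|_]; first by rewrite e in x0.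
  exists M; split.
  - move=> s ps Ms; rewrite /expoN mul1n mul0n subn0 logn_big //; last by apply: leq_trans xM Ms.
    rewrite addn0 big1 // => i pi.
    have ix : i <= x := ltn_ord i.
    suff -> : eps s i = 0 by [].
    rewrite /epsN.
    have -> : (s <= P) = false by apply/negbTE; rewrite -ltnNge; apply: leq_trans PM Ms.
    rewrite /=; rewrite /pb; destruct (excluded_middle_informative _) as [hst|nst] => /=.
      have : s < Bd by apply: (hB s i) => //; rewrite ltnS; apply: leq_trans ix xX.
      move=> sB; exfalso; lia.
    case: eqP => // esi /=.
    exfalso; lia.
  - transitivity (G x * \prod_(i < M | prime i) i ^ logn i x); first by rewrite prod_logn.
    rewrite /G -big_split /=; apply: eq_bigr => i pi.
    by rewrite /expoN mul1n mul0n subn0 (A_ext _ x0 xM) expnD.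
have x1X : x1 <= X by rewrite /X -addnA leq_addr.
have x2X : x2 <= X by rewrite /X -addnA (addnC x2) addnA leq_addl.
have x3X : x3 <= X by rewrite /X leq_addl.
have le_x : forall k t, 0 < k -> t <= R * (k * t).
  move=> k t k0; apply: leq_trans (leq_pmull _ R0); exact: leq_pmull.
have tM : forall k t, 0 < k -> R * (k * t) <= X -> t < M.
  by move=> k t k0 h; apply: leq_ltn_trans (leq_trans (le_x k t k0) h) XM.
have sM : forall k, k <= 5 -> k < M.
  by move=> k k5; apply: leq_ltn_trans PM; apply: leq_trans k5 hP5.
have GA : forall k t s, prime k -> k <= 5 -> prime t -> R * (k * t) <= X ->
    A' M (R * (k * t)) s = A' M R s + (eps s k + eps s t).
  move=> k t s pk k5 pt hX.
  have Ak : A' M k s = eps s k by apply: A_prime => //; exact: sM.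
  have At : A' M t s = eps s t by apply: A_prime => //; apply: (tM k) => //; exact: prime_gt0.
  by rewrite !A_mul ?Ak ?At // ?muln_gt0 ?prime_gt0.
have G12 : G x1 = G x2.
  apply: eq_bigr => i _; rewrite /x1 /x2 !GA //.
  by case: (eps_eq i) => ->.
have G23 : G x2 = G x3.
  apply: eq_bigr => i _; rewrite /x2 /x3 !GA //.
  by case: (eps_eq i) => _ ->.
exists (G x1 * x1), (G x2 * x2), (G x3 * x3); split; try (apply: key => //).
by rewrite G12 G23 -mulnDr /x1 /x2 /x3 -mulnDr h3.
Qed.

End Core.


Lemma Fe_R theta : forall r, sat (M:=Nstd) r (Fe theta) <-> R_e theta (Posz 1) r.
Proof.
move=> r; have h := (@Fe_spec theta r (fun n => r (Nat.add 1 n)) (fun n => erefl)).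
rewrite h /R_e; exact: iff_refl.
Qed.

Lemma sat_inst (M : arith_struct) (s : nat -> M) ts off f :
  sat s (inst ts off f) <-> sat (fun n => teval s (ctx ts off n)) f.
Proof. by rewrite instE /inst_def sat_sub. Qed.

Lemma sat_inst3 (M : arith_struct) (s : nat -> M) t0 t1 t2 off f :
  sat s (inst [:: t0; t1; t2] off f) <->
  sat (scons (teval s t0) (scons (teval s t1) (scons (teval s t2) (fun i => s (Nat.add off i))))) f.
Proof. rewrite sat_inst; apply: sat_ext; by case=> [|[|[|n]]]. Qed.

Definition Pr t := inst [:: t] 0 Fprime.
Definition Lt x y := inst [:: x; y] 0 Flt.

Lemma PrN s t : sat (M:=Nstd) s (Pr t) <-> prime (teval (M:=Nstd) s t).
Proof. by rewrite /Pr (inst_spec Fprime_spec (g := fun n => s (Nat.add 0 n))). Qed.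
Lemma LtN s x y : sat (M:=Nstd) s (Lt x y) <-> teval (M:=Nstd) s x < teval (M:=Nstd) s y.
Proof. by rewrite /Lt (inst_spec Flt_spec (g := fun n => s (Nat.add 0 n))). Qed.
Lemma PrB (M : arith_struct) (s : nat -> M) t : sat s (Pr t) <-> primeB (teval s t).
Proof. by rewrite /Pr sat_inst. Qed.
Lemma LtB (M : arith_struct) (s : nat -> M) x y : sat s (Lt x y) <-> ltB (teval s x) (teval s y).
Proof. by rewrite /Lt sat_inst. Qed.

Definition or3t (u a b c : aterm) := for_ (feq u a) (for_ (feq u b) (feq u c)).

Section Phi.
Variables (theta fP : aform).

(* layout: 0=Q,1=R,2=p,3=q,4=r,5=Delta,6=P,7+i=params *)
Definition H1 := inst [:: #2; #3; #4] 7 theta.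
Definition H2 := feq (tadd (tmul (tnum 3) #2) (tmul (tnum 5) #3)) (tmul (tnum 2) #4).
Definition H3 := fall (fall (fall (fimp (inst [:: #2; #1; #0] 10 theta)
  (fand (Pr #2) (fand (Pr #1) (fand (Pr #0)
    (fand (Lt #9 #2) (fand (Lt #9 #1) (Lt #9 #0))))))))).
Definition H4 := fall (fall (fall (fall (fall (fall
  (fimp (inst [:: #5; #4; #3] 13 theta) (fimp (inst [:: #2; #1; #0] 13 theta)
    (for_ (fand (feq #5 #2) (fand (feq #4 #1) (feq #3 #0)))
      (fall (fimp (or3t #0 #6 #5 #4) (fimp (or3t #0 #3 #2 #1) fbot))))))))))).
Definition H5 := fsub (scons #6 (scons #5 (fun _ => tzero))) fP.
Definition H6 := fex (feq #6 (tsucc (tsucc #0))).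
Definition CONCL := fex (fex (fex (fand
  (inst [:: #2; tmul #4 (tmul (tnum 3) #5); #3; #8; #9] 10 (Fe theta))
  (fand (inst [:: #1; tmul #4 (tmul (tnum 5) #6); #3; #8; #9] 10 (Fe theta))
  (fand (inst [:: #0; tmul #4 (tmul (tnum 2) #7); #3; #8; #9] 10 (Fe theta))
        (feq (tadd #2 #1) #0)))))).
Definition Phi := fimp H1 (fimp H2 (fimp H3 (fimp H4 (fimp H5 (fimp H6 CONCL))))).

Lemma kth_prime_ge5 D P : is_kth_prime (2 ^ D) P -> 2 <= D -> 5 <= P.
Proof.
move=> [pP hc] D2.
have h4 : 4 <= 2 ^ D by rewrite (_ : 4 = 2 ^ 2) // leq_pexp2l.
case: (leqP 5 P) => // lP; exfalso.
have : count prime (iota 0 P) <= 2.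
  by case: P lP {pP hc} => [|[|[|[|[|P]]]]].
rewrite hc; set t := 2 ^ D in h4 *; case: t h4 => //= t h4; lia.
Qed.

Hypothesis hfP : forall r, sat (M:=Nstd) r fP <-> R_P r.

Lemma Phi_N : forall r, sat (M:=Nstd) r Phi.
Proof.
move=> r; rewrite /Phi /H1 /H2 /H3 /H4 /H5 /H6 /CONCL; cbn [sat teval].
move=> h1 h2 h3 h4 h5 h6.
set SN0 := fun a b c => sat (M:=Nstd) (scons a (scons b (scons c (fun i => r (Nat.add 7 i))))) theta.
have hpqr : SN0 (r 2) (r 3) (r 4) by move: h1; rewrite sat_inst3.
have hSN : forall a b c, SN0 a b c ->
    [/\ prime a, prime b, prime c & [/\ r 6 < a, r 6 < b & r 6 < c]].
  move=> a b c h; have := h3 a b c; rewrite sat_inst3 !PrN !LtN => /(_ h) /=.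
  by move=> [? [? [? [? [? ?]]]]].
have hdisj : forall a b c a' b' c', SN0 a b c -> SN0 a' b' c' ->
    (a = a' /\ b = b' /\ c = c') \/
    (forall u, (u = a \/ u = b \/ u = c) -> ~ (u = a' \/ u = b' \/ u = c')).
  move=> a b c a' b' c' h h'; have := h4 a b c a' b' c'; rewrite !sat_inst3.
  by move=> /(_ h h') /=.
have hP5 : 5 <= r 6.
  move: h5; rewrite sat_sub hfP /R_P /= => hk.
  case: h6 => k /= hk'; apply: (kth_prime_ge5 hk); by rewrite hk'.
have [a [b [c [ha hb hc hs]]]] := core_main (r 5) (r 0) hSN hdisj hP5 hpqr h2 (r 1).
exists a, b, c; rewrite !sat_inst !Fe_R.
by split; [exact: ha | split; [exact: hb | split; [exact: hc | exact: hs]]].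
Qed.

End Phi.


Definition Psi := for_ (feq #0 tzero) (for_ (feq #0 (tsucc tzero)) (fex (feq #1 (tsucc (tsucc #0))))).
Lemma Psi_N : forall r, sat (M:=Nstd) r Psi.
Proof.
move=> r /=; case: (r 0) => [|[|k]]; [by left|by right; left|right; right; by exists k].
Qed.

Theorem lemma4p7
  (B : arith_struct) (hB : models_ThN B)
  (hBns : exists x : B, ~ standard x)
  (Delta : B) (hDelta : ~ standard Delta)
  (P : B) (hP : inB R_P (scons P (scons Delta (fun _ => s0 B))))
  (theta : aform) (sigma : nat -> B)
  (hS : forall p q r : B, sat (scons p (scons q (scons r sigma))) theta ->
          [/\ primeB p, primeB q, primeB r,
              sadd (smul (num B 3) p) (smul (num B 5) q) = smul (num B 2) r
            & [/\ ltB P p, ltB P q & ltB P r]])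
  (hdisj : forall p q r p' q' r' : B,
          sat (scons p (scons q (scons r sigma))) theta ->
          sat (scons p' (scons q' (scons r' sigma))) theta ->
          (p, q, r) = (p', q', r') \/
          (forall u : B, (u = p \/ u = q \/ u = r) -> ~ (u = p' \/ u = q' \/ u = r'))) :
  forall Q R : B, inO Delta Q -> inO Delta R ->
  forall p q r : B, sat (scons p (scons q (scons r sigma))) theta ->
  exists a b c : B,
    [/\ eB Delta P theta sigma (smul R (smul (num B 3) p)) (sadd Q (num B 1)) a,
        eB Delta P theta sigma (smul R (smul (num B 5) q)) (sadd Q (num B 1)) b,
        eB Delta P theta sigma (smul R (smul (num B 2) r)) (sadd Q (num B 1)) c
      & sadd a b = c].
Proof.
move=> Q R hQ hR p q r hth.
have [fP [hfP hPsat]] := hP.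
have H := hB (Phi theta fP) (Phi_N hfP)
  (scons Q (scons R (scons p (scons q (scons r (scons Delta (scons P sigma))))))).
move: H; rewrite /Phi /H1 /H2 /H3 /H4 /H5 /H6 /CONCL; cbn [sat teval] => H.
have [hpp hpq hpr heq _] := hS _ _ _ hth.
have h6 : exists k : B, Delta = sS (sS k).
  have := hB Psi Psi_N (scons Delta (fun _ => s0 B)); cbn [sat teval scons].
  case=> [e|[e|[k e]]]; last by exists k.
  - by case: hDelta; exists 0.
  - by case: hDelta; exists 1.
move: H; rewrite sat_inst3 => /(_ hth heq) H.
destruct H as [a [b [c [ea [eb [ec es]]]]]].
- move=> x y z; rewrite sat_inst3 !PrB !LtB => h.
  have [? ? ? _ [? ? ?]] := hS _ _ _ h.
  by do 5 (split; first by []).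
- move=> x1 x2 x3 y1 y2 y3; rewrite !sat_inst3 => h h'.
  case: (hdisj _ _ _ _ _ _ h h') => [[-> -> ->]|dj]; first by left.
  by right => u hu hu'; apply: (dj u hu hu').
- rewrite sat_sub; apply: (sat_ext1 _ hPsat); by case=> [|[|n]].
- exact: h6.
- exists a, b, c; split; last exact: es.
  + exists Q, (Posz 1); split; first exact: hQ.
    split; first reflexivity.
    exists (Fe theta); split; first exact: Fe_R.
    move: ea; rewrite sat_inst; apply: sat_ext1; by case=> [|[|[|[|[|n]]]]].
  + exists Q, (Posz 1); split; first exact: hQ.
    split; first reflexivity.
    exists (Fe theta); split; first exact: Fe_R.
    move: eb; rewrite sat_inst; apply: sat_ext1; by case=> [|[|[|[|[|n]]]]].
  + exists Q, (Posz 1); split; first exact: hQ.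
    split; first reflexivity.
    exists (Fe theta); split; first exact: Fe_R.
    move: ec; rewrite sat_inst; apply: sat_ext1; by case=> [|[|[|[|[|n]]]]].
Qed.
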